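(* Let $m_0>0$ and $U_0>0$ with $m_0\le U_0$. There exist parameters $\eta>0$ and $\alpha\in[0,1]$, depending only on $m_0,U_0,d$, such that the fixed-share algorithm with these parameters satisfies the following: for all $T\ge1$, all loss vectors $\ell_1,\dots,\ell_T\in[0,1]^d$, and all $u_1,\dots,u_T\in\mathbb R_+^d$ with $\|u_1\|_1+m(u_1^T)\le m_0$ and $\sum_{t=1}^T\|u_t\|_1\le U_0$, \[ \sum_{t=1}^T\|u_t\|_1\hat p_t^\top\ell_t-\sum_{t=1}^Tu_t^\top\ell_t\le\sqrt{\frac{U_0}{2}\Big(m_0\ln d+U_0\,h\Big(\frac{m_0}{U_0}\Big)\Big)}\le\sqrt{\frac{U_0m_0}{2}\Big(\ln d+\ln\frac{eU_0}{m_0}\Big)}. \]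
   Context: Let $d\ge1$ and $\Delta_d=\{q\in[0,1]^d:\sum_{i=1}^d q_i=1\}$. The generalized share algorithm with learning rate $\eta>0$ and mixing functions $\psi_t:[0,1]^{td}\to\Delta_d$ ($t\ge2$) works as follows: $\hat p_1=v_1=(1/d,\dots,1/d)$. At each round $t=1,2,\dots$ it predicts $\hat p_t=(\hat p_{1,t},\dots,\hat p_{d,t})\in\Delta_d$, observes a loss vector $\ell_t=(\ell_{1,t},\dots,\ell_{d,t})\in[0,1]^d$ (arbitrary), and suffers loss $\hat p_t^\top\ell_t$. It then forms the pre-weights $v_{j,t+1}=\hat p_{j,t}e^{-\eta\ell_{j,t}}/\sum_{i=1}^d\hat p_{i,t}e^{-\eta\ell_{i,t}}$ for $j=1,\dots,d$, sets $v_{t+1}=(v_{1,t+1},\dots,v_{d,t+1})$, and defines $\hat p_{t+1}=\psi_{t+1}(V_{t+1})$ where $V_{t+1}=[v_{i,s}]_{1\le i\le d,1\le s\le t+1}$ is the $d\times(t+1)$ matrix of all pre-weights so far. The fixed-share algorithm with parameters $\eta>0$, $\alpha\in[0,1]$ is the generalized share algorithm with the mixing rule $\hat p_{j,t+1}=\alpha/d+(1-\alpha)v_{j,t+1}$ for all $j$ and $t\ge1$. For $x,y\in\mathbb R_+^d$, $D_{\mathrm{TV}}(x,y)=\sum_{i:\,x_i\ge y_i}(x_i-y_i)$, and for $u_1,\dots,u_T\in\mathbb R_+^d$, $m(u_1^T)=\sum_{t=2}^T D_{\mathrm{TV}}(u_t,u_{t-1})$. $h(x)=-x\ln x-(1-x)\ln(1-x)$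 is the binary entropy on $[0,1]$ (with $0\ln0=0$). *)

(* Defs.v *)
From Stdlib Require Import Reals.
Open Scope R_scope.

Fixpoint sumR (n : nat) (f : nat -> R) : R :=
  match n with
  | O => 0
  | S k => sumR k f + f k
  end.

(* Vectors in R^d are functions nat -> R, coordinates 0..d-1 used. *)
Definition dot (d : nat) (x y : nat -> R) : R := sumR d (fun i => x i * y i).

Definition norm1 (d : nat) (x : nat -> R) : R := sumR d (fun i => Rabs (x i)).

Definition DTV (d : nat) (x y : nat -> R) : R :=
  sumR d (fun i => if Rle_dec (y i) (x i) then x i - y i else 0).

(* m(u_1^T) = sum_{t=2}^T D_TV(u_t, u_{t-1}); rounds indexed from 1 *)
Definition mshift (d T : nat) (u : nat -> nat -> R) : R :=
  sumR (T - 1) (fun k => DTV d (u (S (S k))) (u (S k))).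

Definition xlnx (x : R) : R := if Rle_dec x 0 then 0 else x * ln x.

Definition hbin (x : R) : R := - xlnx x - xlnx (1 - x).

(* Fixed-share algorithm.  fs_pred eta alpha d l n is the prediction
   \hat p_{n+1} (rounds indexed from 1), l t i = \ell_{i,t}. *)
Fixpoint fs_pred (eta alpha : R) (d : nat) (l : nat -> nat -> R) (n : nat)
  : nat -> R :=
  match n with
  | O => fun _ => / INR d
  | S k =>
      let p := fs_pred eta alpha d l k in
      let Z := sumR d (fun i => p i * exp (- eta * l (S k) i)) in
      fun j => alpha / INR d + (1 - alpha) * (p j * exp (- eta * l (S k) j) / Z)
  end.

Definition phat (eta alpha : R) (d : nat) (l : nat -> nat -> R) (t : nat)
  : nat -> R := fs_pred eta alpha d l (t - 1).

(* Main.v *)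
Require Import Defs.
From Stdlib Require Import Reals Lra Psatz Lia.
From Coquelicot Require Import Coquelicot.
Open Scope R_scope.

Lemma sumR_ext n f g : (forall i, (i < n)%nat -> f i = g i) -> sumR n f = sumR n g.
Proof. induction n; simpl; intros H; [reflexivity|]. rewrite IHn by (intros; apply H; lia). rewrite H by lia. reflexivity. Qed.

Lemma sumR_le n f g : (forall i, (i < n)%nat -> f i <= g i) -> sumR n f <= sumR n g.
Proof. induction n; simpl; intros H; [lra|]. pose proof (H n ltac:(lia)). pose proof (IHn ltac:(intros; apply H; lia)). lra. Qed.

Lemma sumR_plus n f g : sumR n (fun i => f i + g i) = sumR n f + sumR n g.
Proof. induction n; simpl; [ring|]. rewrite IHn. ring. Qed.

Lemma sumR_minus n f g : sumR n (fun i => f i - g i) = sumR n f - sumR n g.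
Proof. induction n; simpl; [ring|]. rewrite IHn. ring. Qed.

Lemma sumR_scal n c f : sumR n (fun i => c * f i) = c * sumR n f.
Proof. induction n; simpl; [ring|]. rewrite IHn. ring. Qed.

Lemma sumR_const n c : sumR n (fun _ => c) = INR n * c.
Proof. induction n; simpl sumR; [simpl; ring|]. rewrite IHn, S_INR. ring. Qed.

Lemma sumR_nonneg n f : (forall i, (i < n)%nat -> 0 <= f i) -> 0 <= sumR n f.
Proof. intros H. rewrite <- (Rmult_0_r (INR n)), <- sumR_const. apply sumR_le. auto. Qed.

Lemma sumR_term_le n f j : (forall i, (i < n)%nat -> 0 <= f i) -> (j < n)%nat -> f j <= sumR n f.
Proof. induction n; intros H Hj; [lia|]. simpl.
destruct (Nat.eq_dec j n) as [->|Hne].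
- pose proof (sumR_nonneg n f ltac:(intros; apply H; lia)). lra.
- pose proof (IHn ltac:(intros; apply H; lia) ltac:(lia)). pose proof (H n ltac:(lia)). lra. Qed.

Lemma sumR_shift n f : sumR (S n) f = f 0%nat + sumR n (fun k => f (S k)).
Proof. induction n; simpl; [ring|]. simpl in IHn. rewrite IHn. ring. Qed.

Lemma sumR_bound1 n f i : (i < n)%nat -> (forall j, (j < n)%nat -> f j <= 1) ->
  sumR n f <= f i + (INR n - 1).
Proof. induction n; intros Hi H; [lia|]. simpl sumR. rewrite S_INR.
destruct (Nat.eq_dec i n) as [->|Hne].
- assert (sumR n f <= sumR n (fun _ => 1)) by (apply sumR_le; intros; apply H; lia).
  rewrite sumR_const in H0. lra.
- pose proof (IHn ltac:(lia) ltac:(intros; apply H; lia)). pose proof (H n ltac:(lia)). lra. Qed.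

Lemma ln_le x y : 0 < x -> x <= y -> ln x <= ln y.
Proof. intros Hx Hxy. destruct (Req_dec x y) as [->|]; [lra|]. left; apply ln_increasing; lra. Qed.

Lemma ln_le_sub1 x : 0 < x -> ln x <= x - 1.
Proof. intros Hx. pose proof (exp_ineq1_le (ln x)). rewrite exp_ln in H by lra. lra. Qed.

Lemma ln_nonneg x : 1 <= x -> 0 <= ln x.
Proof. intros. rewrite <- ln_1. apply ln_le; lra. Qed.

Lemma ln_nonpos x : 0 < x -> x <= 1 -> ln x <= 0.
Proof. intros. rewrite <- ln_1. apply ln_le; lra. Qed.

Lemma exp_convex eta x : 0 <= x <= 1 -> exp (- eta * x) <= 1 - x + x * exp (- eta).
Proof. intros Hx.
pose proof (exp_ineq1_le (eta * x)). pose proof (exp_ineq1_le (- eta * (1 - x))).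
assert (E1: exp (- eta * x) * exp (eta * x) = 1).
{ rewrite <- exp_plus. replace (- eta * x + eta * x) with 0 by ring. apply exp_0. }
assert (E2: exp (- eta * x) * exp (- eta * (1 - x)) = exp (- eta)).
{ rewrite <- exp_plus. f_equal. ring. }
pose proof (exp_pos (- eta * x)).
assert (0 <= exp (- eta * x) * (1 - x) * (exp (eta * x) - (1 + eta * x))) by (apply Rmult_le_pos; [apply Rmult_le_pos|]; lra).
assert (0 <= exp (- eta * x) * x * (exp (- eta * (1 - x)) - (1 + - eta * (1 - x)))) by (apply Rmult_le_pos; [apply Rmult_le_pos|]; lra).
nra. Qed.

Lemma mono_deriv (f df : R->R) a b : a <= b ->
  (forall x, a <= x <= b -> is_derive f x (df x)) ->
  (forall x, a <= x <= b -> 0 <= df x) -> f a <= f b.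
Proof.
intros Hab Hd Hp. destruct (Req_dec a b) as [->|Hne]; [lra|].
destruct (MVT_gen f a b df) as [c [Hc Heq]].
- intros x Hx. apply Hd. rewrite Rmin_left in Hx by lra. rewrite Rmax_right in Hx by lra. lra.
- intros x Hx. rewrite Rmin_left in Hx by lra. rewrite Rmax_right in Hx by lra.
  apply derivable_continuous_pt. exists (df x). apply is_derive_Reals. apply Hd. lra.
- rewrite Rmin_left in Hc by lra. rewrite Rmax_right in Hc by lra.
  assert (0 <= df c * (b - a)) by (apply Rmult_le_pos; [apply Hp; lra| lra]). lra.
Qed.

Lemma Apos mu y : 0 <= mu <= 1 -> 0 < 1 - mu + mu * exp (- y).
Proof. intros H. pose proof (exp_pos (-y)).
destruct (Req_dec mu 0). subst; lra. nra. Qed.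

Lemma hoeff2 mu eta : 0 <= mu <= 1 -> 0 <= eta ->
  ln (1 - mu + mu * exp (- eta)) <= - eta * mu + eta ^ 2 / 8.
Proof.
intros Hmu Heta.
set (A := fun y => 1 - mu + mu * exp (- y)).
assert (HA : forall y, 0 < A y) by (intros; apply Apos; auto).
assert (H1 : forall y, 0 <= y -> 0 <= - mu + y / 4 + mu * exp (- y) / A y).
{ intros y Hy.
  assert (E: - mu + 0 / 4 + mu * exp (- 0) / A 0 = 0).
  { unfold A; cbv beta. rewrite Ropp_0, exp_0. replace (1 - mu + mu * 1) with 1 by ring. field. }
  rewrite <- E.
  apply (mono_deriv (fun y => - mu + y / 4 + mu * exp (- y) / A y)
     (fun y => 1/4 - mu * (1 - mu) * exp (- y) / (A y)^2)); [lra| |].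
  - intros x Hx. unfold A. auto_derive.
    + pose proof (HA x). unfold A in H. lra.
    + pose proof (HA x). unfold A in H. field. lra.
  - intros x Hx. pose proof (HA x). pose proof (exp_pos (-x)).
    assert (mu * (1 - mu) * exp (- x) / A x ^ 2 <= 1/4); [|lra].
    apply Rmult_le_reg_r with (A x ^ 2). nra.
    unfold Rdiv. rewrite Rmult_assoc, Rinv_l by (apply pow_nonzero; lra).
    unfold A. pose proof (pow2_ge_0 (1 - mu - mu * exp (- x))). nra. }
assert (H2 : 0 <= - eta * mu + eta ^ 2 / 8 - ln (A eta)).
{ assert (E: - 0 * mu + 0 ^ 2 / 8 - ln (A 0) = 0).
  { unfold A; cbv beta. rewrite Ropp_0, exp_0. replace (1 - mu + mu * 1) with 1 by ring. rewrite ln_1. field. }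
  rewrite <- E.
  apply (mono_deriv (fun y => - y * mu + y ^ 2 / 8 - ln (A y))
     (fun y => - mu + y / 4 + mu * exp (- y) / A y)); [lra| |].
  - intros x Hx. unfold A. auto_derive.
    + pose proof (HA x). unfold A in H. lra.
    + pose proof (HA x). unfold A in H. field. lra.
  - intros x Hx. apply H1. lra. }
unfold A in H2. lra.
Qed.

Lemma ln_lower x : 1 <= x -> 2 * (x - 1) / (x + 1) <= ln x.
Proof. intros Hx.
assert (E: ln 1 - 2 * (1 - 1) / (1 + 1) = 0) by (rewrite ln_1; field).
cut (0 <= ln x - 2 * (x - 1) / (x + 1)); [lra|]. rewrite <- E.
apply (mono_deriv (fun y => ln y - 2 * (y - 1) / (y + 1)) (fun y => / y - 4 / (y + 1) ^ 2)); [lra| |].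
- intros y Hy. auto_derive.
  + lra.
  + field. lra.
- intros y Hy. assert (4 / (y + 1) ^ 2 <= / y); [|lra].
  apply Rmult_le_reg_r with ((y+1)^2 * y). nra.
  field_simplify; try lra. nra.
Qed.

Definition Zf eta alpha d l k := sumR d (fun i => fs_pred eta alpha d l k i * exp (- eta * l (S k) i)).
Definition Vf eta alpha d l k i := fs_pred eta alpha d l k i * exp (- eta * l (S k) i) / Zf eta alpha d l k.

Lemma fs_S eta alpha d l k j : fs_pred eta alpha d l (S k) j = alpha / INR d + (1 - alpha) * Vf eta alpha d l k j.
Proof. reflexivity. Qed.

Lemma INR_d_pos d : (1 <= d)%nat -> 0 < INR d.
Proof. intros. apply lt_0_INR. lia. Qed.

Lemma fs_simplex eta alpha d l : (1 <= d)%nat -> 0 <= alpha <= 1 -> forall k,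
  (forall i, (i < d)%nat -> 0 < fs_pred eta alpha d l k i) /\ sumR d (fs_pred eta alpha d l k) = 1.
Proof. intros Hd Ha. pose proof (INR_d_pos d Hd) as Hdp. induction k as [|k [IHp IHs]].
- split.
  + intros i _. simpl. apply Rinv_0_lt_compat. auto.
  + simpl fs_pred. rewrite sumR_const. field. lra.
- assert (HZ : 0 < Zf eta alpha d l k).
  { apply Rlt_le_trans with (fs_pred eta alpha d l k 0 * exp (- eta * l (S k) 0%nat)).
    - apply Rmult_lt_0_compat; [apply IHp; lia| apply exp_pos].
    - unfold Zf. apply (sumR_term_le d (fun i => fs_pred eta alpha d l k i * exp (- eta * l (S k) i)) 0%nat); [|lia].
      intros i Hi. apply Rmult_le_pos; [left; apply IHp; auto| left; apply exp_pos]. }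
  split.
  + intros i Hi. rewrite fs_S. unfold Vf.
    assert (0 < fs_pred eta alpha d l k i * exp (- eta * l (S k) i) / Zf eta alpha d l k).
    { apply Rdiv_lt_0_compat; auto. apply Rmult_lt_0_compat; [apply IHp; auto| apply exp_pos]. }
    assert (0 <= alpha / INR d) by (unfold Rdiv; apply Rmult_le_pos; [lra| left; apply Rinv_0_lt_compat; lra]).
    destruct (Req_dec alpha 1) as [->|]. 
    * assert (0 < 1 / INR d) by (apply Rdiv_lt_0_compat; lra). lra.
    * assert (0 < 1 - alpha) by lra. nra.
  + rewrite (sumR_ext _ _ (fun j => alpha / INR d + (1 - alpha) * (/ Zf eta alpha d l k * (fs_pred eta alpha d l k j * exp (- eta * l (S k) j))))).
    2:{ intros j _. rewrite fs_S. unfold Vf. unfold Rdiv at 2. ring. }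
    rewrite sumR_plus, sumR_const, sumR_scal, sumR_scal. fold (Zf eta alpha d l k).
    field. split; lra.
Qed.

Lemma Z_pos eta alpha d l k : (1 <= d)%nat -> 0 <= alpha <= 1 -> 0 < Zf eta alpha d l k.
Proof. intros Hd Ha. destruct (fs_simplex eta alpha d l Hd Ha k) as [Hp _].
apply Rlt_le_trans with (fs_pred eta alpha d l k 0 * exp (- eta * l (S k) 0%nat)).
- apply Rmult_lt_0_compat; [apply Hp; lia| apply exp_pos].
- unfold Zf. apply (sumR_term_le d (fun i => fs_pred eta alpha d l k i * exp (- eta * l (S k) i)) 0%nat); [|lia].
  intros i Hi. apply Rmult_le_pos; [left; apply Hp; auto| left; apply exp_pos].
Qed.

Lemma V_bounds eta alpha d l k i : (1 <= d)%nat -> 0 <= alpha <= 1 -> (i < d)%nat ->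
  0 < Vf eta alpha d l k i <= 1.
Proof. intros Hd Ha Hi. destruct (fs_simplex eta alpha d l Hd Ha k) as [Hp _].
pose proof (Z_pos eta alpha d l k Hd Ha). unfold Vf. split.
- apply Rdiv_lt_0_compat; auto. apply Rmult_lt_0_compat; [apply Hp; auto| apply exp_pos].
- apply Rmult_le_reg_r with (Zf eta alpha d l k); auto. unfold Rdiv. rewrite Rmult_assoc, Rinv_l by lra.
  rewrite Rmult_1_r, Rmult_1_l. unfold Zf. apply (sumR_term_le d (fun i => fs_pred eta alpha d l k i * exp (- eta * l (S k) i)) i); auto.
  intros j Hj. apply Rmult_le_pos; [left; apply Hp; auto| left; apply exp_pos].
Qed.

Lemma round_bound eta alpha d l k (u : nat -> R) : (1 <= d)%nat -> 0 <= alpha <= 1 -> 0 <= eta ->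
  (forall i, (i < d)%nat -> 0 <= l (S k) i <= 1) -> (forall i, (i < d)%nat -> 0 <= u i) ->
  eta * (sumR d u * dot d (fs_pred eta alpha d l k) (l (S k)) - dot d u (l (S k)))
  <= sumR d (fun i => u i * (ln (Vf eta alpha d l k i) - ln (fs_pred eta alpha d l k i))) + eta ^ 2 / 8 * sumR d u.
Proof. intros Hd Ha He Hl Hu. destruct (fs_simplex eta alpha d l Hd Ha k) as [Hp Hs].
pose proof (Z_pos eta alpha d l k Hd Ha) as HZ.
set (p := fs_pred eta alpha d l k) in *. set (Z := Zf eta alpha d l k) in *.
set (mu := dot d p (l (S k))).
assert (Hmu : 0 <= mu <= 1).
{ unfold mu, dot. split.
  - apply sumR_nonneg. intros i Hi. apply Rmult_le_pos; [left; apply Hp; auto| apply Hl; auto].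
  - rewrite <- Hs. apply sumR_le. intros i Hi. pose proof (Hp i Hi). pose proof (Hl i Hi). nra. }
assert (HZle : Z <= 1 - mu + mu * exp (- eta)).
{ unfold Z, Zf. fold p.
  apply Rle_trans with (sumR d (fun i => p i + (exp (- eta) - 1) * (p i * l (S k) i))).
  - apply sumR_le. intros i Hi. pose proof (exp_convex eta (l (S k) i) (Hl i Hi)). pose proof (Hp i Hi).
    nra.
  - rewrite sumR_plus, sumR_scal, Hs. unfold mu, dot. lra. }
assert (HlnZ : ln Z <= - eta * mu + eta ^ 2 / 8).
{ eapply Rle_trans; [apply ln_le; eauto|]. apply hoeff2; auto. }
rewrite (sumR_ext d (fun i => u i * (ln (Vf eta alpha d l k i) - ln (p i))) (fun i => (- eta) * (u i * l (S k) i) + (- ln Z) * u i)).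
2:{ intros i Hi. unfold Vf. fold p Z. unfold Rdiv.
    pose proof (Hp i Hi). pose proof (exp_pos (- eta * l (S k) i)).
    assert (0 < / Z) by (apply Rinv_0_lt_compat; auto).
    rewrite ln_mult by (try apply Rmult_lt_0_compat; auto).
    rewrite ln_mult by auto. rewrite ln_exp, ln_Rinv by auto. ring. }
rewrite sumR_plus, !sumR_scal. fold (dot d u (l (S k))). fold mu.
assert (0 <= sumR d u) by (apply sumR_nonneg; auto).
nra.
Qed.

Lemma tele_i a b v v' p Ld L1 : 0 <= a -> 0 <= b -> 0 < v <= 1 ->
  - Ld <= ln p -> - L1 + ln v <= ln p ->
  a * ln v + b * (ln v' - ln p) <= (if Rle_dec a b then b - a else 0) * Ld + Rmin a b * L1 + b * ln v'.
Proof. intros Ha Hb Hv H1 H2. pose proof (ln_nonpos v (proj1 Hv) (proj2 Hv)).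
destruct (Rle_dec a b).
- rewrite Rmin_left by lra.
  assert (0 <= a * (ln p - ln v + L1)) by (apply Rmult_le_pos; lra).
  assert (0 <= (b - a) * (ln p + Ld)) by (apply Rmult_le_pos; lra). nra.
- rewrite Rmin_right by lra.
  assert (0 <= b * (ln p - ln v + L1)) by (apply Rmult_le_pos; lra).
  assert (0 <= (a - b) * (- ln v)) by (apply Rmult_le_pos; lra). nra.
Qed.

Lemma tele eta alpha d l (u : nat -> nat -> R) T : (1 <= d)%nat -> 0 < alpha < 1 ->
  (forall t i, (1 <= t <= T)%nat -> (i < d)%nat -> 0 <= u t i) ->
  forall n, (S n <= T)%nat ->
  sumR (S n) (fun k => sumR d (fun i => u (S k) i * (ln (Vf eta alpha d l k i) - ln (fs_pred eta alpha d l k i))))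
  <= sumR d (u 1%nat) * ln (INR d)
     + sumR n (fun k => DTV d (u (S (S k))) (u (S k)) * (- ln (alpha / INR d))
                        + sumR d (fun i => Rmin (u (S k) i) (u (S (S k)) i)) * (- ln (1 - alpha)))
     + sumR d (fun i => u (S n) i * ln (Vf eta alpha d l n i)).
Proof. intros Hd Ha Hu. pose proof (INR_d_pos d Hd) as Hdp.
assert (Ha' : 0 <= alpha <= 1) by lra.
induction n as [|n IH]; intros HT.
- simpl sumR at 1 3. rewrite Rplus_0_l, Rplus_0_r.
  rewrite (sumR_ext d (fun i => u 1%nat i * (ln (Vf eta alpha d l 0 i) - ln (/ INR d)))
     (fun i => ln (INR d) * u 1%nat i + u 1%nat i * ln (Vf eta alpha d l 0 i))).
  2:{ intros i Hi. rewrite ln_Rinv by auto. ring. }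
  rewrite sumR_plus, sumR_scal. lra.
- specialize (IH ltac:(lia)).
  change (sumR (S (S n)) ?F) with (sumR (S n) F + F (S n)).
  change (sumR (S n) ?F) with (sumR n F + F n) at 2.
  cbv beta.
  set (Ld := - ln (alpha / INR d)). set (L1 := - ln (1 - alpha)). fold Ld L1 in IH.
  match type of IH with ?A <= ?B + ?C + ?D => cut (D + sumR d (fun i => u (S (S n)) i * (ln (Vf eta alpha d l (S n) i) - ln (fs_pred eta alpha d l (S n) i))) <=
     DTV d (u (S (S n))) (u (S n)) * Ld + sumR d (fun i => Rmin (u (S n) i) (u (S (S n)) i)) * L1 + sumR d (fun i => u (S (S n)) i * ln (Vf eta alpha d l (S n) i))); [lra|] end.
  unfold DTV. rewrite <- !sumR_plus. rewrite Rmult_comm, <- sumR_scal. rewrite (Rmult_comm _ L1), <- sumR_scal.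
  rewrite <- !sumR_plus. apply sumR_le. intros i Hi.
  rewrite (Rmult_comm Ld), (Rmult_comm L1).
  pose proof (V_bounds eta alpha d l n i Hd Ha' Hi) as HV.
  assert (Hp : fs_pred eta alpha d l (S n) i = alpha / INR d + (1 - alpha) * Vf eta alpha d l n i) by apply fs_S.
  assert (0 < alpha / INR d) by (apply Rdiv_lt_0_compat; lra).
  assert (0 < (1 - alpha) * Vf eta alpha d l n i) by (apply Rmult_lt_0_compat; lra).
  apply tele_i.
  + apply Hu; [lia|auto].
  + apply Hu; [lia|auto].
  + auto.
  + unfold Ld. rewrite Ropp_involutive. apply ln_le; [auto|]. lra.
  + unfold L1. rewrite Ropp_involutive, <- ln_mult by lra. apply ln_le; [auto|]. lra.
Qed.

Lemma hbin_eq r : 0 < r < 1 -> hbin r = - r * ln r - (1 - r) * ln (1 - r).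
Proof. intros H. unfold hbin, xlnx. destruct (Rle_dec r 0); [lra|]. destruct (Rle_dec (1 - r) 0); [lra|]. ring. Qed.

Lemma hbin_1 : hbin 1 = 0.
Proof. unfold hbin, xlnx. destruct (Rle_dec 1 0); [lra|]. destruct (Rle_dec (1 - 1) 0); [|lra]. rewrite ln_1. ring. Qed.

Lemma second_ineq d m0 U0 : (1 <= d)%nat -> 0 < m0 -> 0 < U0 -> m0 <= U0 ->
  sqrt (U0 / 2 * (m0 * ln (INR d) + U0 * hbin (m0 / U0)))
  <= sqrt (U0 * m0 / 2 * (ln (INR d) + ln (exp 1 * U0 / m0))).
Proof. intros Hd Hm HU Hmu. apply sqrt_le_1_alt.
set (r := m0 / U0).
assert (Hr : 0 < r <= 1) by (unfold r; split; [apply Rdiv_lt_0_compat; lra| apply Rmult_le_reg_r with U0; [lra|]; unfold Rdiv; rewrite Rmult_assoc, Rinv_l; lra]).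
assert (Hm0 : m0 = r * U0) by (unfold r; field; lra).
assert (E : ln (exp 1 * U0 / m0) = 1 - ln r).
{ replace (exp 1 * U0 / m0) with (exp 1 * / r) by (unfold r; field; lra).
  rewrite ln_mult, ln_exp, ln_Rinv; try lra. apply exp_pos. apply Rinv_0_lt_compat; lra. }
rewrite E.
assert (U0 * hbin r <= m0 * (1 - ln r)); [|nra].
destruct (Req_dec r 1) as [->|Hne].
- rewrite hbin_1, ln_1. lra.
- rewrite hbin_eq by lra.
  pose proof (ln_le_sub1 (/ (1 - r)) ltac:(apply Rinv_0_lt_compat; lra)).
  rewrite ln_Rinv in H by lra.
  assert (- ln (1 - r) * (1 - r) <= r).
  { assert ((/ (1 - r) - 1) * (1 - r) = r) by (field; lra).
    assert (0 < 1 - r) by lra. nra. }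
  rewrite Hm0. nra.
Qed.

Lemma final_alg K U0 eta Reg : 0 < K -> 0 < U0 -> eta = sqrt (8 * K / U0) ->
  eta * Reg <= K + eta ^ 2 / 8 * U0 -> Reg <= sqrt (U0 / 2 * K).
Proof. intros HK HU He H.
assert (Hpos : 0 < 8 * K / U0) by (apply Rdiv_lt_0_compat; lra).
assert (He2 : eta ^ 2 = 8 * K / U0) by (rewrite He; simpl; rewrite Rmult_1_r; apply sqrt_sqrt; lra).
assert (Hep : 0 < eta) by (rewrite He; apply sqrt_lt_R0; auto).
assert (Hs : sqrt (U0 / 2 * K) * eta = 2 * K).
{ rewrite He, <- sqrt_mult_alt.
  - replace (U0 / 2 * K * (8 * K / U0)) with ((2 * K) * (2 * K)) by (field; lra).
    apply sqrt_square. lra.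
  - apply Rmult_le_pos; [lra|lra]. }
assert (eta ^ 2 / 8 * U0 = K) by (rewrite He2; field; lra).
apply Rmult_le_reg_r with eta; auto. lra.
Qed.

Lemma norm1_eq d (x : nat -> R) : (forall i, (i < d)%nat -> 0 <= x i) -> norm1 d x = sumR d x.
Proof. intros H. unfold norm1. apply sumR_ext. intros i Hi. apply Rabs_pos_eq. auto. Qed.

Lemma DTV_M d (x y : nat -> R) :
  DTV d x y + sumR d (fun i => Rmin (y i) (x i)) = sumR d x.
Proof. unfold DTV. rewrite <- sumR_plus. apply sumR_ext. intros i _.
destruct (Rle_dec (y i) (x i)). rewrite Rmin_left; lra. rewrite Rmin_right; lra. Qed.

Lemma DTV_nonneg d (x y : nat -> R) : 0 <= DTV d x y.
Proof. unfold DTV. apply sumR_nonneg. intros i _. destruct (Rle_dec (y i) (x i)); lra. Qed.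

Lemma regime_A (d : nat) (m0 U0 : R) :
  (1 <= d)%nat -> 0 < m0 -> 0 < U0 -> m0 / U0 <= INR d / (INR d + 1) ->
  exists eta alpha : R, 0 < eta /\ 0 <= alpha <= 1 /\
    forall (T : nat) (l u : nat -> nat -> R),
      (1 <= T)%nat ->
      (forall t i, (1 <= t <= T)%nat -> (i < d)%nat -> 0 <= l t i <= 1) ->
      (forall t i, (1 <= t <= T)%nat -> (i < d)%nat -> 0 <= u t i) ->
      norm1 d (u 1%nat) + mshift d T u <= m0 ->
      sumR T (fun k => norm1 d (u (S k))) <= U0 ->
      sumR T (fun k => norm1 d (u (S k)) * dot d (phat eta alpha d l (S k)) (l (S k)))
        - sumR T (fun k => dot d (u (S k)) (l (S k)))
        <= sqrt (U0 / 2 * (m0 * ln (INR d) + U0 * hbin (m0 / U0))).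
Proof. intros Hd Hm HU Hreg.
pose proof (INR_d_pos d Hd) as Hdp.
set (r := m0 / U0) in *.
assert (Hr0 : 0 < r) by (unfold r; apply Rdiv_lt_0_compat; lra).
assert (Hr1 : r < 1).
{ apply Rle_lt_trans with (INR d / (INR d + 1)); auto.
  apply Rmult_lt_reg_r with (INR d + 1); [lra|]. unfold Rdiv. rewrite Rmult_assoc, Rinv_l; lra. }
assert (Hm0 : m0 = r * U0) by (unfold r; field; lra).
set (K := m0 * ln (INR d) + U0 * hbin r).
assert (Hlnd : 0 <= ln (INR d)) by (apply ln_nonneg; apply (le_INR 1); lia).
assert (Hlnr : ln r < 0) by (rewrite <- ln_1; apply ln_increasing; lra).
assert (Hln1r : ln (1 - r) < 0) by (rewrite <- ln_1; apply ln_increasing; lra).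
assert (HK : 0 < K).
{ unfold K. rewrite hbin_eq by lra.
  assert (0 <= m0 * ln (INR d)) by (apply Rmult_le_pos; lra).
  assert (0 < U0 * (- r * ln r)) by (apply Rmult_lt_0_compat; nra).
  assert (0 <= U0 * (- (1 - r) * ln (1 - r))) by (apply Rmult_le_pos; nra). nra. }
set (Ld := - ln (r / INR d)). set (L1 := - ln (1 - r)).
assert (HLd : Ld = ln (INR d) - ln r).
{ unfold Ld, Rdiv. rewrite ln_mult, ln_Rinv; try lra. apply Rinv_0_lt_compat; lra. }
assert (HL1 : 0 <= L1) by (unfold L1; lra).
assert (HLdL1 : L1 <= Ld).
{ unfold Ld, L1. apply Ropp_le_contravar. apply ln_le. apply Rdiv_lt_0_compat; lra.
  apply Rmult_le_reg_r with (INR d); [lra|]. unfold Rdiv. rewrite Rmult_assoc, Rinv_l by lra.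
  apply Rmult_le_compat_r with (r := INR d + 1) in Hreg; [|lra].
  unfold Rdiv in Hreg. rewrite Rmult_assoc, Rinv_l in Hreg by lra. lra. }
assert (HKe : K = m0 * Ld + (U0 - m0) * L1).
{ unfold K. rewrite hbin_eq, HLd by lra. unfold L1. rewrite Hm0. ring. }
exists (sqrt (8 * K / U0)), r. split; [apply sqrt_lt_R0; apply Rdiv_lt_0_compat; lra|]. split; [lra|].
set (eta := sqrt (8 * K / U0)).
assert (Heta : 0 <= eta) by apply sqrt_pos.
intros T l u HT Hl Hu Hmm Hsum.
destruct T as [|T']; [lia|].
assert (Ha' : 0 <= r <= 1) by lra.
set (Ut := fun k => sumR d (u (S k))).
rewrite (sumR_ext _ (fun k => norm1 d (u (S k))) Ut) in Hsum.
2: intros k Hk; unfold Ut; apply norm1_eq; intros; apply Hu; [lia|auto].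
rewrite norm1_eq in Hmm by (intros; apply Hu; [lia|auto]).
unfold mshift in Hmm. replace (S T' - 1)%nat with T' in Hmm by lia.
rewrite <- sumR_minus.
rewrite (sumR_ext _ _ (fun k => sumR d (u (S k)) * dot d (fs_pred eta r d l k) (l (S k)) - dot d (u (S k)) (l (S k)))).
2:{ intros k Hk. unfold phat. replace (S k - 1)%nat with k by lia. rewrite norm1_eq; [reflexivity|]. intros; apply Hu; [lia|auto]. }
set (X := fun k => sumR d (fun i => u (S k) i * (ln (Vf eta r d l k i) - ln (fs_pred eta r d l k i)))).
assert (H1 : eta * sumR (S T') (fun k => sumR d (u (S k)) * dot d (fs_pred eta r d l k) (l (S k)) - dot d (u (S k)) (l (S k)))
   <= sumR (S T') X + eta ^ 2 / 8 * sumR (S T') Ut).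
{ rewrite <- !sumR_scal, <- sumR_plus. apply sumR_le. intros k Hk.
  apply round_bound; auto.
  - intros i Hi. apply Hl; [lia|auto].
  - intros i Hi. apply Hu; [lia|auto]. }
pose proof (tele eta r d l u (S T') Hd ltac:(lra) Hu T' ltac:(lia)) as Htele. fold X in Htele.
fold Ld L1 in Htele.
assert (Hlast : sumR d (fun i => u (S T') i * ln (Vf eta r d l T' i)) <= 0).
{ rewrite <- (Rmult_0_r (INR d)), <- sumR_const. apply sumR_le. intros i Hi.
  pose proof (V_bounds eta r d l T' i Hd Ha' Hi). pose proof (ln_nonpos _ (proj1 H) (proj2 H)).
  pose proof (Hu (S T') i ltac:(lia) Hi). nra. }
rewrite (sumR_ext T' (fun k => DTV d (u (S (S k))) (u (S k)) * Ld + sumR d (fun i => Rmin (u (S k) i) (u (S (S k)) i)) * L1)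
  (fun k => Ld * DTV d (u (S (S k))) (u (S k)) + L1 * sumR d (fun i => Rmin (u (S k) i) (u (S (S k)) i)))) in Htele by (intros; ring).
rewrite sumR_plus, !sumR_scal in Htele.

set (m := sumR T' (fun k => DTV d (u (S (S k))) (u (S k)))) in *.
set (S0 := sumR T' (fun k => sumR d (fun i => Rmin (u (S k) i) (u (S (S k)) i)))) in *.
set (a1 := sumR d (u 1%nat)) in *.
assert (Hid : a1 + m + S0 = sumR (S T') Ut).
{ rewrite sumR_shift. unfold m, S0. rewrite Rplus_assoc, <- sumR_plus.
  unfold Ut at 1. fold a1. f_equal. apply sumR_ext. intros k Hk. apply DTV_M. }
assert (Ha1 : 0 <= a1) by (apply sumR_nonneg; intros; apply Hu; [lia|auto]).
assert (HX : sumR (S T') X <= K).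
{ rewrite HKe. set (U := sumR (S T') Ut) in *.
  assert (0 <= a1 * (Ld - ln (INR d))) by (apply Rmult_le_pos; lra).
  assert (0 <= (m0 - (a1 + m)) * (Ld - L1)) by (apply Rmult_le_pos; lra).
  assert (0 <= (U0 - U) * L1) by (apply Rmult_le_pos; lra).
  nra. }
apply (final_alg K U0 eta); auto.
assert (0 <= eta ^ 2 / 8) by (apply Rmult_le_pos; [apply pow2_ge_0| lra]).
assert (eta ^ 2 / 8 * sumR (S T') Ut <= eta ^ 2 / 8 * U0) by (apply Rmult_le_compat_l; auto).
lra.
Qed.

Lemma fs_unif eta d l k j : fs_pred eta 1 d l k j = / INR d.
Proof. destruct k; [reflexivity|]. rewrite fs_S. unfold Rdiv. ring. Qed.

Lemma regime_B (d : nat) (m0 U0 : R) :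
  (1 <= d)%nat -> 0 < m0 -> 0 < U0 -> m0 <= U0 -> ~ (m0 / U0 <= INR d / (INR d + 1)) ->
  exists eta alpha : R, 0 < eta /\ 0 <= alpha <= 1 /\
    forall (T : nat) (l u : nat -> nat -> R),
      (1 <= T)%nat ->
      (forall t i, (1 <= t <= T)%nat -> (i < d)%nat -> 0 <= l t i <= 1) ->
      (forall t i, (1 <= t <= T)%nat -> (i < d)%nat -> 0 <= u t i) ->
      norm1 d (u 1%nat) + mshift d T u <= m0 ->
      sumR T (fun k => norm1 d (u (S k))) <= U0 ->
      sumR T (fun k => norm1 d (u (S k)) * dot d (phat eta alpha d l (S k)) (l (S k)))
        - sumR T (fun k => dot d (u (S k)) (l (S k)))
        <= sqrt (U0 / 2 * (m0 * ln (INR d) + U0 * hbin (m0 / U0))).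
Proof. intros Hd Hm HU Hmu Hreg.
pose proof (INR_d_pos d Hd) as Hdp.
assert (HD1 : 1 <= INR d) by (apply (le_INR 1); lia).
set (D := INR d) in *.
set (r := m0 / U0) in *.
assert (Hr1 : r <= 1) by (unfold r; apply Rmult_le_reg_r with U0; [lra|]; unfold Rdiv; rewrite Rmult_assoc, Rinv_l; lra).
assert (Hrd : D / (D + 1) < r) by lra.
assert (Hdd : 0 < D / (D + 1)) by (apply Rdiv_lt_0_compat; lra).
assert (Hm0 : m0 = r * U0) by (unfold r; field; lra).
set (K := m0 * ln D + U0 * hbin r).
assert (Hh : (1 - r) * ln D <= hbin r).
{ destruct (Req_dec r 1) as [->|Hne].
  - rewrite hbin_1. lra.
  - rewrite hbin_eq by lra.
    assert (ln r <= 0) by (apply ln_nonpos; lra).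
    assert (Hx : D * (1 - r) <= 1).
    { assert (D < r * (D + 1)).
      { apply Rmult_lt_reg_r with (/ (D + 1)). apply Rinv_0_lt_compat; lra.
        replace (r * (D + 1) * / (D + 1)) with r by (field; lra). exact Hrd. }
      nra. }
    assert (ln (D * (1 - r)) <= 0) by (apply ln_nonpos; [apply Rmult_lt_0_compat|]; lra).
    rewrite ln_mult in H0 by lra.
    assert (0 <= (1 - r) * (- (ln D + ln (1 - r)))) by (apply Rmult_le_pos; lra).
    assert (0 <= r * (- ln r)) by (apply Rmult_le_pos; lra). nra. }
assert (HKl : U0 * ln D <= K).
{ unfold K. rewrite Hm0. assert (U0 * ((1 - r) * ln D) <= U0 * hbin r) by (apply Rmult_le_compat_l; lra). nra. }
assert (HlnD : 2 * (D - 1) / (D + 1) <= ln D) by (apply ln_lower; auto).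
assert (Hq : 2 * (1 - / D) ^ 2 <= 2 * (D - 1) / (D + 1)).
{ assert (Hqd : D * / D = 1) by (field; lra).
  assert (0 < / D <= 1).
  { split. apply Rinv_0_lt_compat; lra. rewrite <- Rinv_1. apply Rinv_le_contravar; lra. }
  apply Rmult_le_reg_r with (D + 1); [lra|]. replace (2 * (D - 1) / (D + 1) * (D + 1)) with (2 * (D - 1)) by (field; lra). nra. }
exists 1, 1. split; [lra|]. split; [lra|].
intros T l u HT Hl Hu Hmm Hsum.
set (Ut := fun k => sumR d (u (S k))).
rewrite (sumR_ext _ (fun k => norm1 d (u (S k))) Ut) in Hsum.
2: intros k Hk; unfold Ut; apply norm1_eq; intros; apply Hu; [lia|auto].
rewrite <- sumR_minus.
assert (Hreg2 : sumR T (fun k => norm1 d (u (S k)) * dot d (phat 1 1 d l (S k)) (l (S k)) - dot d (u (S k)) (l (S k)))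
   <= sumR T (fun k => (1 - / D) * Ut k)).
{ apply sumR_le. intros k Hk.
  rewrite norm1_eq by (intros; apply Hu; [lia|auto]).
  unfold dot. rewrite (sumR_ext d (fun i => phat 1 1 d l (S k) i * l (S k) i) (fun i => / D * l (S k) i)).
  2:{ intros i _. unfold phat. rewrite fs_unif. reflexivity. }
  rewrite sumR_scal. unfold Ut. set (s := sumR d (l (S k))).
  assert (E : sumR d (u (S k)) * (/ D * s) - sumR d (fun i => u (S k) i * l (S k) i)
     = sumR d (fun i => u (S k) i * (/ D * s) - u (S k) i * l (S k) i)).
  { rewrite sumR_minus. f_equal. rewrite Rmult_comm, <- sumR_scal. apply sumR_ext. intros; ring. }
  rewrite E, <- sumR_scal.
  apply sumR_le. intros i Hi. unfold s.
  pose proof (sumR_bound1 d (l (S k)) i Hi ltac:(intros; apply Hl; [lia|auto])) as Hb.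
  pose proof (Hl (S k) i ltac:(lia) Hi). pose proof (Hu (S k) i ltac:(lia) Hi). change (INR d) with D in Hb.
  assert (Hqd : D * / D = 1) by (field; lra).
  assert (0 < / D <= 1).
  { split. apply Rinv_0_lt_compat; lra. rewrite <- Rinv_1. apply Rinv_le_contravar; lra. }
  assert (/ D * sumR d (l (S k)) - l (S k) i <= 1 - / D).
  { assert (/ D * sumR d (l (S k)) <= / D * (l (S k) i + (D - 1))) by (apply Rmult_le_compat_l; lra).
    nra. }
  fold D. nra. }
rewrite sumR_scal in Hreg2.
assert (HqU : 0 <= 1 - / D).
{ assert (/ D <= 1) by (rewrite <- Rinv_1; apply Rinv_le_contravar; lra). lra. }
eapply Rle_trans; [apply Hreg2|].
eapply Rle_trans; [apply Rmult_le_compat_l; [apply HqU| apply Hsum]|].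
rewrite <- (sqrt_square ((1 - / D) * U0)) by nra.
apply sqrt_le_1_alt. fold K.
nra.
Qed.

Theorem corollary1 (d : nat) (m0 U0 : R) :
  (1 <= d)%nat -> 0 < m0 -> 0 < U0 -> m0 <= U0 ->
  exists eta alpha : R, 0 < eta /\ 0 <= alpha <= 1 /\
    forall (T : nat) (l u : nat -> nat -> R),
      (1 <= T)%nat ->
      (forall t i, (1 <= t <= T)%nat -> (i < d)%nat -> 0 <= l t i <= 1) ->
      (forall t i, (1 <= t <= T)%nat -> (i < d)%nat -> 0 <= u t i) ->
      norm1 d (u 1%nat) + mshift d T u <= m0 ->
      sumR T (fun k => norm1 d (u (S k))) <= U0 ->
      sumR T (fun k => norm1 d (u (S k)) * dot d (phat eta alpha d l (S k)) (l (S k)))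
        - sumR T (fun k => dot d (u (S k)) (l (S k)))
        <= sqrt (U0 / 2 * (m0 * ln (INR d) + U0 * hbin (m0 / U0)))
      /\ sqrt (U0 / 2 * (m0 * ln (INR d) + U0 * hbin (m0 / U0)))
        <= sqrt (U0 * m0 / 2 * (ln (INR d) + ln (exp 1 * U0 / m0))).
Proof. intros Hd Hm HU Hmu.
assert (H2 := second_ineq d m0 U0 Hd Hm HU Hmu).
destruct (Rle_dec (m0 / U0) (INR d / (INR d + 1))) as [Hr|Hr].
- destruct (regime_A d m0 U0 Hd Hm HU Hr) as [eta [alpha [He [Ha H]]]].
  exists eta, alpha. split; [auto|]. split; [auto|]. intros. split; auto.
- destruct (regime_B d m0 U0 Hd Hm HU Hmu Hr) as [eta [alpha [He [Ha H]]]].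
  exists eta, alpha. split; [auto|]. split; [auto|]. intros. split; auto.
Qed.
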